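(* Let $m\ge 2$ be an integer and let $n$ be a positive integer with $m^j\le n<m^{j+1}$ for some integer $j\ge 0$, with base $m$ representation $n=\alpha_j m^j+\cdots+\alpha_1 m+\alpha_0$ ($\alpha_j>0$, $0\le\alpha_i\le m-1$). For $1\le i\le j$ let $\chi_i=0$ if $\alpha_{i-1}>0$ and $\chi_i=1$ if $\alpha_{i-1}=0$. Then \[ c_m(mn)\equiv \alpha_0+(\alpha_0-1)\sum_{i=1}^{j}(\alpha_1-\chi_1)(\alpha_2-\chi_2)\cdots(\alpha_i-\chi_i)\pmod m. \]
   Context: An $m$-ary partition of a positive integer $N$ is a partition of $N$ in which every part is a power of $m$. It is without gaps if, whenever $m^i$ is its largest part, every $m^k$ with $0\le k<i$ also appears as a part. $c_m(N)$ denotes the number of $m$-ary partitions of $N$ without gaps. *)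

(* Defs.v *)
From mathcomp Require Import all_boot all_order all_algebra.
Set Implicit Arguments. Unset Strict Implicit. Unset Printing Implicit Defensive.
Import GRing.Theory Num.Theory.

(* A partition of N is represented by its multiplicity function
   mu : part p (0 <= p <= N) |-> number of times p occurs (0 <= mu p <= N),
   with mu 0 = 0 (parts are positive) and \sum_p p * mu p = N. *)
Definition is_partition (N : nat) (mu : {ffun 'I_N.+1 -> 'I_N.+1}) : bool :=
  (mu ord0 == 0 :> nat) && (\sum_(p : 'I_N.+1) p * mu p == N)%N.

Definition is_mary (m N : nat) (mu : {ffun 'I_N.+1 -> 'I_N.+1}) : bool :=
  [forall p : 'I_N.+1, (0 < mu p)%N ==> [exists k : 'I_N.+1, p == m ^ k :> nat]].

Definition no_gaps (m N : nat) (mu : {ffun 'I_N.+1 -> 'I_N.+1}) : bool :=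
  [forall p : 'I_N.+1,
     ((0 < mu p)%N && [forall q : 'I_N.+1, (p < q)%N ==> (mu q == 0 :> nat)]) ==>
     [forall i : 'I_N.+1, (p == m ^ i :> nat) ==>
        [forall k : 'I_N.+1, (k < i)%N ==> (0 < mu (inord (m ^ k)))%N]]].

Definition c (m N : nat) : nat :=
  #|[set mu : {ffun 'I_N.+1 -> 'I_N.+1} |
       [&& is_partition mu, is_mary m mu & no_gaps m mu]]|.

Definition chi (alpha : nat -> nat) (i : nat) : int :=
  if (0 < alpha i.-1)%N then 0%R else 1%R.

(* Main.v *)
Require Import Defs.
From mathcomp Require Import all_boot all_order all_algebra.
From mathcomp Require Import zify ring.
Import GRing.Theory Num.Theory.
Set Implicit Arguments. Unset Strict Implicit. Unset Printing Implicit Defensive.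

Definition ext N (mu : {ffun 'I_N.+1 -> 'I_N.+1}) (p : nat) : nat := mu (inord p).

Lemma inord_out n p : n < p -> (inord p : 'I_n.+1) = ord0.
Proof. by move=> H; rewrite /inord /insubd insubN // -leqNgt. Qed.

Lemma ext_val N (mu : {ffun 'I_N.+1 -> 'I_N.+1}) (p : 'I_N.+1) : ext mu p = nat_of_ord (mu p).
Proof. by rewrite /ext inord_val. Qed.

Lemma ext0 N (mu : {ffun 'I_N.+1 -> 'I_N.+1}) : ext mu 0 = nat_of_ord (mu ord0).
Proof. by rewrite /ext; congr (nat_of_ord (mu _)); apply: val_inj; rewrite /= inordK. Qed.

Lemma ext_out N (mu : {ffun 'I_N.+1 -> 'I_N.+1}) p : N < p -> ext mu p = ext mu 0.
Proof. by move=> H; rewrite ext0 /ext inord_out. Qed.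

Definition Dprop m (f : nat -> nat) :=
  forall p, 0 < f p -> p = 1 \/ (m %| p /\ 0 < f (p %/ m)).

Definition Good m N (f : nat -> nat) :=
  [/\ f 0 = 0, \sum_(p < N.+1) p * f p = N & Dprop m f].

Definition A m N := [set mu : {ffun 'I_N.+1 -> 'I_N.+1} |
       [&& is_partition mu, is_mary m mu & no_gaps m mu]].

Lemma cE m N : c m N = #|A m N|.
Proof. by []. Qed.

Lemma D_f1 m f : 1 < m -> f 0 = 0 -> Dprop m f -> forall p, 0 < f p -> 0 < f 1.
Proof.
move=> m1 f0 D; elim/ltn_ind => p IH fp.
case: (D p fp) => [e|[mp fq]]; first by rewrite e in fp.
apply: (IH (p %/ m)) => //; apply: ltn_Pdiv => //.
by case: p {IH mp fq} fp => [|p]; rewrite ?f0.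
Qed.

Lemma D_pow m f : 1 < m -> f 0 = 0 -> Dprop m f -> forall p, 0 < f p -> exists k, p = m ^ k.
Proof.
move=> m1 f0 D; elim/ltn_ind => p IH fp.
case: (D p fp) => [->|[mp fq]]; first by exists 0.
have p0 : 0 < p by case: p {IH mp fq} fp => [|p]; rewrite ?f0.
case: (IH (p %/ m) (ltn_Pdiv m1 p0) fq) => k hk.
by exists k.+1; rewrite expnSr -hk divnK.
Qed.

Lemma D_down m f : 1 < m -> Dprop m f -> forall i k, 0 < f (m ^ i) -> k <= i -> 0 < f (m ^ k).
Proof.
move=> m1 D; elim => [|i IH] k fi ki.
  by move: ki; rewrite leqn0 => /eqP->.
rewrite leq_eqVlt in ki; case/orP: ki => [/eqP->//|ki]; apply: IH => //.
case: (D _ fi) => [h|[_ h]].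
  by have := ltn_expl i.+1 m1; lia.
by rewrite expnSr mulnK // in h; lia.
Qed.

Lemma inA m N mu : 1 < m -> (mu \in A m N) <-> Good m N (ext mu).
Proof.
move=> m1; rewrite inE /is_partition /is_mary /no_gaps.
have sumE : \sum_(p : 'I_N.+1) p * mu p = \sum_(p < N.+1) p * ext mu p.
  by apply: eq_bigr => p _; rewrite ext_val.
split.
- case/and3P => /andP[/eqP m0 /eqP S] /forallP M /forallP G.
  split; [by rewrite ext0 m0 | by rewrite -sumE |].
  move=> p fp.
  have pN : p < N.+1.
    rewrite ltnNge; apply/negP => H; move: fp; rewrite ext_out // ext0 m0 //.
  have fp' : 0 < mu (Ordinal pN) by rewrite -ext_val.
  case/existsP: (implyP (M (Ordinal pN)) fp') => k /eqP /= pk.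
  case: (posnP k) => [k0 | kpos]; first by left; rewrite pk k0.
  right; split; first by rewrite pk; apply: (dvdn_exp kpos (dvdnn m)).
  have pdm : p %/ m = m ^ k.-1.
    by rewrite pk -{1}(prednK kpos) expnSr mulnK //; lia.
  rewrite pdm.
  case: (@arg_maxnP _ (Ordinal pN) (fun q => 0 < mu q) val fp') => Q fQ Qmax.
  have H1 : [forall q : 'I_N.+1, (Q < q) ==> (mu q == 0 :> nat)].
    apply/forallP => q; apply/implyP => Qq.
    case: (posnP (mu q)) => [/eqP//|/Qmax]; rewrite /geq /= => h; by move: Qq; rewrite ltnNge h.
  move: (implyP (G Q) (introT andP (conj fQ H1))) => /forallP H2.
  case/existsP: (implyP (M Q) fQ) => i /eqP Qi.
  move: (implyP (H2 i) (introT eqP Qi)) => /forallP H3.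
  have pQ := Qmax (Ordinal pN) fp'; rewrite /= pk Qi leq_exp2l // in pQ.
  have ki : k.-1 < i by lia.
  have kN : k.-1 < N.+1 by have := ltn_ord i; lia.
  exact: (implyP (H3 (Ordinal kN)) ki).
- case => f0 S D; apply/and3P; split.
  + apply/andP; split; first by rewrite -ext0 f0.
    by rewrite sumE S.
  + apply/forallP => q; apply/implyP => fq.
    rewrite -ext_val in fq; case: (D_pow m1 f0 D fq) => k qk.
    have kN : k < N.+1 by have := ltn_expl k m1; have := ltn_ord q; lia.
    by apply/existsP; exists (Ordinal kN); rewrite /= qk.
  + apply/forallP => q; apply/implyP => /andP[fq _]; apply/forallP => i.
    apply/implyP => /eqP qi; apply/forallP => k; apply/implyP => ki.
    rewrite -ext_val qi in fq; exact: (D_down m1 D fq (ltnW ki)).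
Qed.

Lemma sum_trunc a b (F : nat -> nat) : a <= b -> (forall q, a <= q -> F q = 0) ->
  \sum_(q < b) F q = \sum_(q < a) F q.
Proof.
move=> ab Fz; rewrite -!(big_mkord xpredT) (@big_cat_nat _ _ _ a 0 b _ _ (leq0n a) ab) /=.
by rewrite [X in _ + X]big_nat_cond [X in _ + X]big1 ?addn0 // => q /andP[/andP[aq _] _]; apply: Fz.
Qed.

Lemma term_le (F : nat -> nat) K q : q < K -> F q <= \sum_(i < K) F i.
Proof. by move=> qK; rewrite (bigD1 (Ordinal qK)) //= leq_addr. Qed.

Lemma mult_sum m Q (h : nat -> nat) : 0 < m ->
  \sum_(p < m * Q) (if m %| p then h (p %/ m) else 0) = \sum_(q < Q) h q.
Proof.
move=> m0; rewrite -(big_mkord xpredT (fun p => if m %| p then h (p %/ m) else 0)) -(big_mkord xpredT h); elim: Q => [|Q IH].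
  by rewrite muln0 !big_geq.
rewrite big_nat_recr //= -IH mulnS addnC (@big_cat_nat _ _ _ (m * Q) 0 _ _ _ (leq0n _) (leq_addr _ _)) /=.
congr (_ + _).
rewrite -{1}(add0n (m * Q)) big_addn addKn big_ltn // add0n (dvdn_mulr Q (dvdnn m)) mulKn //.
rewrite big_nat_cond big1 ?addn0 // => i /andP[/andP[i1 im] _].
rewrite (dvdn_addl _ (dvdn_mulr Q (dvdnn m))); case: ifP => // /(dvdn_leq i1); lia.
Qed.

Lemma sum_split m N f : 1 < m -> (forall p, 0 < f p -> p = 1 \/ m %| p) ->
  (forall p, N < p -> f p = 0) ->
  \sum_(p < N.+1) p * f p = f 1 + m * \sum_(q < N.+1) q * f (m * q).
Proof.
move=> m1 D fz.
rewrite -(@sum_trunc N.+1 (m * N.+1) (fun p => p * f p)); first last.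
- by move=> q Hq; rewrite fz ?muln0.
- by rewrite leq_pmull //; lia.
rewrite (eq_bigr (fun p : 'I_(m * N.+1) => (if val p == 1 then f 1 else 0) +
   (if m %| p then m * ((p %/ m) * f (m * (p %/ m))) else 0))); last first.
  move=> p _; case: eqVneq => [->|p1].
    have -> : (m %| 1) = false by rewrite dvdn1; apply/eqP; lia.
    by rewrite mul1n addn0.
  case: ifP => [mp|mp].
    have e : m * (p %/ m) = p by rewrite mulnC divnK.
    by rewrite add0n mulnA e.
  case: (posnP (f p)) => [->|/D]; first by rewrite muln0.
  by case => e; [move: p1; rewrite /= e | rewrite e in mp].
have h1 : 1 < m * N.+1 by rewrite (leq_trans m1) // leq_pmulr.
rewrite big_split /= (bigD1 (Ordinal h1)) //= big1 ?addn0; last first.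
  move=> i ne; case: eqP => // e; case/eqP: ne; exact: val_inj.
rewrite (@mult_sum m N.+1 (fun q => m * (q * f (m * q)))) ?big_distrr //; lia.
Qed.

Definition phi m N t (mu : {ffun 'I_N.+1 -> 'I_N.+1}) : {ffun 'I_t.+1 -> 'I_t.+1} :=
  [ffun q : 'I_t.+1 => inord (ext mu (m * q))].

Definition psi m N t (nu : {ffun 'I_t.+1 -> 'I_t.+1}) : {ffun 'I_N.+1 -> 'I_N.+1} :=
  [ffun p : 'I_N.+1 => inord (if val p == 1 then N - m * t
                              else if m %| p then ext nu (p %/ m) else 0)].

Definition gpsi m N t (nu : {ffun 'I_t.+1 -> 'I_t.+1}) p :=
  if N < p then 0 else if p == 1 then N - m * t
  else if m %| p then ext nu (p %/ m) else 0.

Arguments phi : clear implicits.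
Arguments psi : clear implicits.
Arguments gpsi : clear implicits.

Lemma ext_psi m N t nu p : t <= N -> ext nu 0 = 0 ->
  ext (psi m N t nu) p = gpsi m N t nu p.
Proof.
move=> tN n0; rewrite /gpsi; case: ltnP => pN.
  rewrite ext_out // /ext ffunE (@inordK N 0) //= dvdn0 div0n.
  by rewrite (@inordK N 0) //= n0 inordK.
rewrite /ext ffunE.
have ep : \val (inord p : 'I_N.+1) = p by rewrite /= inordK.
have ep2 : nat_of_ord (inord p : 'I_N.+1) = p by rewrite inordK.
rewrite ep ep2 inordK //.
case: ifP => _; first by lia.
case: ifP => _ //; rewrite /ext; have := ltn_ord (nu (inord (p %/ m))); lia.
Qed.

Lemma mq1 m q : 1 < m -> (m * q == 1) = false.
Proof. by move=> m1; rewrite muln_eq1; apply/negP => /andP[/eqP h _]; lia. Qed.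

Lemma gpsi_mq m N t nu q : 1 < m -> m * q <= N -> gpsi m N t nu (m * q) = ext nu q.
Proof.
move=> m1 h; rewrite /gpsi ltnNge h /= mq1 // (dvdn_mulr q (dvdnn m)) mulKn //; lia.
Qed.

Lemma Good_ext m N f g : f =1 g -> Good m N g -> Good m N f.
Proof.
move=> e [g0 S D]; split; first by rewrite e.
  by rewrite -[RHS]S; apply: eq_bigr => p _; rewrite e.
by move=> p; rewrite e => /D; rewrite e.
Qed.

Lemma good_facts m N f : 1 < m -> 0 < N -> Good m N f ->
  (forall p, N < p -> f p = 0) ->
  0 < f 1 /\ N = f 1 + m * \sum_(q < N.+1) q * f (m * q).
Proof.
move=> m1 N0 [f0 S D] fz; split; last first.
  rewrite -{1}S; apply: sum_split => // p /D; case; [by left|by case; right].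
have D1 := D_f1 m1 f0 D.
case: (posnP (f 1)) => // f10; exfalso.
have : \sum_(p < N.+1) p * f p = 0.
  rewrite big1 // => p _; case: (posnP (f p)) => [->|/D1]; first by rewrite muln0.
  by rewrite f10.
lia.
Qed.

Lemma card_t m N t : 1 < m -> 0 < N -> m * t < N ->
  #|[pred mu | (mu \in A m N) && ((N - ext mu 1) %/ m == t)]| = c m t.
Proof.
move=> m1 N0 mtN.
have tN : t <= N by apply: leq_trans (ltnW mtN); apply: leq_pmull; lia.
rewrite cE -(@card_in_imset _ _ (psi m N t) (A m t)); last first.
  move=> nu1 nu2 /(inA _ m1) [n10 _ _] /(inA _ m1) [n20 _ _] e.
  apply/ffunP => q; apply: val_inj.
  have hq : m * q <= N by apply: leq_trans (ltnW mtN); rewrite leq_mul2l -ltnS ltn_ord orbT.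
  change (nat_of_ord (nu1 q) = nat_of_ord (nu2 q)); rewrite -!ext_val -(gpsi_mq nu1 m1 hq) -(gpsi_mq nu2 m1 hq).
  by rewrite -!ext_psi // e.
apply: eq_card => mu; rewrite inE; apply/idP/imsetP.
- case/andP => /(inA _ m1) G /eqP key.
  have fz : forall p, N < p -> ext mu p = 0.
    by case: G => f0 _ _ p Np; rewrite ext_out.
  have [f1 NE] := good_facts m1 N0 G fz.
  case: G => f0 S D.
  move: key; rewrite [X in X - _]NE addKn mulKn; last by lia.
  set s := \sum_(q < N.+1) _ => key.
  have bnd : forall q, q * ext mu (m * q) <= t.
    move=> q; case: (ltnP N q) => qN.
      by rewrite fz ?muln0 //; apply: leq_trans qN _; apply: leq_pmull; lia.
    by rewrite -key; apply: (term_le (fun q => q * ext mu (m * q))).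
  have ez : forall q, t < q -> ext mu (m * q) = 0.
    move=> q tq; have := bnd q; case: (posnP (ext mu (m * q))) => // pos h.
    have := leq_pmulr q pos; lia.
  have ephi : forall q, ext (phi m N t mu) q = ext mu (m * q).
    move=> q; case: (ltnP t q) => tq.
      rewrite ext_out // ez // ext0 ffunE /= muln0.
      by rewrite -/(ext mu 0) f0 inordK.
    rewrite /ext ffunE.
    have ep : nat_of_ord (inord q : 'I_t.+1) = q by rewrite inordK.
    rewrite ep inordK // -/(ext mu (m * q)) ltnS.
    case: (posnP q) => [->|q0]; first by rewrite muln0 f0.
    by apply: leq_trans (bnd q); apply: leq_pmull.
  exists (phi m N t mu).
    apply/(inA _ m1); split.
    - by rewrite ephi muln0.
    - transitivity (\sum_(q < t.+1) q * ext mu (m * q)).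
        by apply: eq_bigr => q _; rewrite ephi.
      rewrite -[X in _ = X]key; symmetry.
      apply: (@sum_trunc t.+1 N.+1 (fun q => q * ext mu (m * q))).
      + by rewrite ltnS.
      + by move=> q tq; rewrite ez ?muln0.
    - move=> q; rewrite !ephi => pos.
      case: (D _ pos) => [/eqP|[_ h]]; first by rewrite mq1.
      rewrite mulKn in h; last by lia.
      case: (D _ h) => [->|[mq h2]]; [by left | right; split => //].
      by rewrite mulnC divnK.
  apply/ffunP => p; apply: val_inj.
  have phi0 : ext (phi m N t mu) 0 = 0 by rewrite ephi muln0.
  change (nat_of_ord (mu p) = nat_of_ord (psi m N t (phi m N t mu) p)).
  rewrite -[LHS]ext_val -ext_val ext_psi // /gpsi ltnNge -ltnS ltn_ord /=.
  case: eqP => [p1|p1]; first by rewrite p1; lia.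
  case: ifP => mp; first by rewrite ephi mulnC divnK.
  case: (posnP (ext mu p)) => // /D [] // [] /=; by rewrite mp.
- case=> nu /(inA _ m1) [n0 S D] ->.
  have eg := fun p => ext_psi m p tN n0.
  apply/andP; split.
    apply/(inA _ m1); apply: (Good_ext eg); split.
    + by rewrite /gpsi /= dvdn0 div0n.
    + rewrite (@sum_split m N); first last.
      * by move=> p; rewrite /gpsi => ->.
      * move=> p; rewrite /gpsi; case: (ltnP N p) => // _; case: eqP => [->|_]; first by left.
        by case: ifP => // mp _; right.
      * by [].
      rewrite {1}/gpsi ltnNge N0 /=.
      rewrite (eq_bigr (fun q : 'I_N.+1 => q * ext nu q)); last first.
        move=> q _; case: (leqP (m * q) N) => h; first by rewrite gpsi_mq.
        rewrite /gpsi h ext_out ?n0 ?muln0 //.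
        by have := ltn_trans mtN h; rewrite ltn_mul2l => /andP[].
      have -> : \sum_(q < N.+1) q * ext nu q = \sum_(q < t.+1) q * ext nu q.
        apply: (@sum_trunc t.+1 N.+1 (fun q => q * ext nu q)).
        + by rewrite ltnS.
        + by move=> q tq; rewrite ext_out // n0 muln0.
      by rewrite S; lia.
    + move=> p; rewrite /gpsi; case: (ltnP N p) => // pN; case: eqP => [->|p1]; first by left.
      case: ifP => // mp pos; right; split => //.
      have -> : N < p %/ m = false by apply/negbTE; rewrite -leqNgt (leq_trans (leq_div _ _)).
      case: eqP => [_|pm1]; first by lia.
      case: (D _ pos) => [//|[mpm h]].
      by rewrite mpm.
  by rewrite eg /gpsi ltnNge N0 /= subKn ?mulKn //; lia.
Qed.

Lemma cS m N : 1 < m -> 0 < N -> c m N = \sum_(t < ((N.-1) %/ m).+1) c m t.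
Proof.
move=> m1 N0.
have keyN : forall mu : {ffun 'I_N.+1 -> 'I_N.+1}, (N - ext mu 1) %/ m < N.+1.
  by move=> mu; rewrite ltnS (leq_trans (leq_div _ _)) // leq_subr.
rewrite cE -sum1_card (partition_big (fun mu => (inord ((N - ext mu 1) %/ m) : 'I_N.+1)) xpredT) //=.
rewrite (eq_bigr (fun j : 'I_N.+1 => if m * j < N then c m j else 0)); last first.
  move=> j _.
  transitivity #|[pred mu | (mu \in A m N) && ((N - ext mu 1) %/ m == j)]|.
    rewrite -sum1_card; apply: eq_bigl => mu /=; congr (_ && _).
    apply/eqP/eqP => [<-|->]; first by rewrite inordK.
    by apply: val_inj; rewrite /= inordK.
  case: ifP => mj; first by rewrite card_t.
  apply: eq_card0 => mu /=; apply/negP => /andP[/(inA _ m1) G /eqP key].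
  have fz : forall p, N < p -> ext mu p = 0.
    by case: G => f0 _ _ p Np; rewrite ext_out.
  have [f1 NE] := good_facts m1 N0 G fz.
  move: key; rewrite [X in X - _]NE addKn mulKn; last by lia.
  move=> key; move: NE; rewrite key => NE.
  by move/negbT: mj; rewrite -leqNgt; lia.
rewrite -(big_mkord xpredT (fun j => if m * j < N then c m j else 0)) -big_mkcond /=.
rewrite -(big_mkord xpredT (c m)) [RHS](@big_nat_widen _ _ _ 0 _ N.+1); last first.
  by rewrite ltnS; apply: leq_trans (leq_div _ _) (leq_pred _).
apply: eq_bigl => t /=; rewrite ltnS leq_divRL; last by lia.
by apply/idP/idP; lia.
Qed.

Definition E m x := \sum_(t < x.+1) c m t.

Lemma c0 m : 1 < m -> c m 0 = 1.
Proof.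
move=> m1; rewrite cE.
have allA : forall mu, mu \in A m 0.
  move=> mu; apply/(inA _ m1).
  have z : forall p, ext mu p = 0 by move=> p; rewrite /ext; case: (mu (inord p)) => [[|k] Hk] //.
  split; first exact: z.
    by rewrite big_ord_recr big_ord0 /= z.
  by move=> p; rewrite z.
rewrite (eq_card (B := {ffun 'I_1 -> 'I_1})) //.
by rewrite card_ffun !card_ord.
Qed.

Lemma Esucc m x : 1 < m -> E m x.+1 = E m x + E m (x %/ m).
Proof. by move=> m1; rewrite /E big_ord_recr /= (cS m1). Qed.

Lemma Elin m q a : 1 < m -> a <= m -> E m (m * q + a) = E m (m * q) + a * E m q.
Proof.
move=> m1; elim: a => [|a IH] h; first by rewrite addn0 mul0n addn0.
rewrite addnS Esucc // IH ?(ltnW h) // mulnC divnMDl; last by lia.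
rewrite divn_small // addn0 mulSn; lia.
Qed.

Lemma Emod m q : 1 < m -> E m (m * q) = 1 %[mod m].
Proof.
move=> m1; elim: q => [|q IH].
  by rewrite muln0 /E big_ord_recr big_ord0 /= c0.
by rewrite mulnS addnC Elin // [m * E m q]mulnC addnC modnMDl.
Qed.

Lemma Ekey m q a : 1 < m -> a <= m ->
  ((E m (m * q + a))%:Z = 1 + (a%:Z * (E m q)%:Z)%R %[mod m%:Z])%Z.
Proof.
move=> m1 am; rewrite Elin // PoszD PoszM -modzDml modz_nat Emod // -modz_nat modzDml.
by [].
Qed.

Definition V m (alpha : nat -> nat) j := \sum_(i < j) alpha i * m ^ i.

Lemma V_S m alpha j : V m alpha j.+1 = alpha 0 + m * V m (fun i => alpha i.+1) j.
Proof.
rewrite /V big_ord_recl expn0 muln1; congr (_ + _); rewrite big_distrr.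
by apply: eq_bigr => i _; rewrite /= expnS mulnCA.
Qed.

Definition T (alpha : nat -> nat) j : int :=
  (\sum_(1%N <= i < j.+1) \prod_(1%N <= l < i.+1) ((alpha l)%:Z - chi alpha l))%R.

Lemma T0 alpha : T alpha 0 = 0%R.
Proof. by rewrite /T big_geq. Qed.

Lemma T_S alpha j : T alpha j.+1 =
  (((alpha 1%N)%:Z - chi alpha 1%N) * (1 + T (fun i => alpha i.+1) j))%R.
Proof.
rewrite /T big_add1 /= big_ltn // big_nat1 mulrDr mulr1 big_distrr /=; congr (_ + _)%R.
apply: eq_big_nat => i /andP[i1 _].
rewrite big_ltn // big_add1 /=; congr (_ * _)%R.
apply: eq_big_nat => l /andP[l1 _].
by rewrite /chi /= (prednK l1).
Qed.

Lemma congr1M (a x y d : int) : (x = y %[mod d])%Z -> (1 + a * x = 1 + a * y %[mod d])%Z.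
Proof. by move=> h; rewrite -modzDmr -modzMmr h modzMmr modzDmr. Qed.

Lemma L1 m j : 1 < m -> forall alpha, (forall i, i <= j -> alpha i < m) -> 0 < alpha 0 ->
  ((E m (V m (fun i => alpha i.+1) j))%:Z = 1 + T alpha j %[mod m%:Z])%Z.
Proof.
move=> m1; elim: j => [|j IH] alpha ha a0.
  by rewrite T0 /V big_ord0 /E big_ord_recr big_ord0 /= c0.
rewrite V_S addnC Ekey //; last by have := ha 1 isT; lia.
rewrite T_S /chi /= a0 subr0.
case: (posnP (alpha 1)) => [->|a1]; first by rewrite !mul0r.
apply: congr1M; apply: IH => //= i ij; apply: ha; lia.
Qed.

Lemma L2 m j : 1 < m -> forall alpha, (forall i, i <= j -> alpha i < m) ->
  0 < V m alpha j.+1 ->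
  ((E m (V m alpha j.+1).-1)%:Z =
     (alpha 0%N)%:Z + ((alpha 0%N)%:Z - 1) * T alpha j %[mod m%:Z])%Z.
Proof.
move=> m1; elim: j => [|j IH] alpha ha; rewrite V_S => V0.
- case: (posnP (alpha 0)) => [a0|a0].
    by move: V0; rewrite a0 /V big_ord0 muln0.
  have -> : (alpha 0 + m * V m (fun i => alpha i.+1) 0).-1 =
            m * V m (fun i => alpha i.+1) 0 + (alpha 0).-1 by lia.
  rewrite Ekey //; last by have := ha 0 isT; lia.
  rewrite /V big_ord0 /E big_ord_recr big_ord0 /= c0 // T0.
  rewrite -subn1 -subzn // mulr1 mulr0 addr0 addrC subrK.
  by [].
- case: (posnP (alpha 0)) => [a0|a0].
    rewrite a0 add0n in V0 *.
    set W := V m _ j.+1 in V0 *.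
    have Wp : 0 < W by move: V0; rewrite muln_gt0 => /andP[].
    have -> : (m * W).-1 = m * W.-1 + m.-1.
      by rewrite -(prednK Wp) mulnS /=; lia.
    rewrite Ekey //; last by lia.
    have IH' := IH (fun i => alpha i.+1) (fun i ij => ha i.+1 ij) Wp.
    rewrite (congr1M _ IH') /= T_S /chi a0 /=.
    rewrite -subn1 -subzn; last by lia.
    set Y := ((alpha 1)%:Z + _)%R.
    have -> : (1 + (m%:Z - 1) * Y = (1 - Y) + Y * m%:Z)%R.
      by ring.
    rewrite addrC modzMDl; congr (_ %% _)%Z; rewrite /Y; ring.
  have -> : (alpha 0 + m * V m (fun i => alpha i.+1) j.+1).-1 =
            m * V m (fun i => alpha i.+1) j.+1 + (alpha 0).-1 by lia.
  rewrite Ekey //; last by have := ha 0 isT; lia.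
  rewrite (congr1M _ (L1 m1 ha a0)).
  rewrite -subn1 -subzn //; congr (_ %% _)%Z; ring.
Qed.

Theorem theorem1p4 (m n j : nat) (alpha : nat -> nat) :
  (2 <= m)%N -> (0 < n)%N ->
  (m ^ j <= n < m ^ j.+1)%N ->
  n = (\sum_(i < j.+1) alpha i * m ^ i)%N ->
  (0 < alpha j)%N ->
  (forall i, (i <= j)%N -> (alpha i <= m - 1)%N) ->
  ((c m (m * n))%:Z =
     (alpha 0%N)%:Z + ((alpha 0%N)%:Z - 1) *
       \sum_(1%N <= i < j.+1) \prod_(1%N <= l < i.+1) ((alpha l)%:Z - chi alpha l)
   %[mod m%:Z])%Z.
Proof.
move=> m1 n0 _ nE _ hb.
have ha : forall i, i <= j -> alpha i < m by move=> i /hb; lia.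
have Vn : n = V m alpha j.+1 by rewrite nE.
have -> : c m (m * n) = E m n.-1.
  rewrite cS //; last by rewrite muln_gt0; lia.
  have -> : (m * n).-1 = n.-1 * m + m.-1 by rewrite -(prednK n0) mulnS /=; lia.
  by rewrite divnMDl ?divn_small ?addn0 //; lia.
rewrite Vn; apply: (L2 m1 ha); rewrite -Vn //.
Qed.
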